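(* Let $(\frac pq,\frac rs)$ be a Farey pair of order $n$ with $q<s$, let $d=\lfloor n/q\rfloor$, $\alpha\in(0,1)$, $\beta=1-\alpha$, and $\phi_\alpha(t)=(t^q-\beta)^d-\alpha^dt^{qd-s}$. Then $\phi_\alpha$ has no multiple root lying in the set $\hat{\mathcal K}_n(q,s)$.
   Context: A matrix is stochastic if it is entrywise nonnegative with all row sums $1$; $\Theta_n$ is the set of all eigenvalues of all $n\times n$ stochastic matrices and $\partial\Theta_n$ its boundary. $\mathcal{F}_n=\{p/q:0\le p<q\le n,\ \gcd(p,q)=1\}$; a Farey pair of order $n$ is a pair $(\frac pq,\frac rs)$ of elements of $\mathcal F_n$ with $\frac pq<\frac rs$ and no element of $\mathcal F_n$ strictly between them. For such a pair, $\arg(q,s)=(\frac{2\pi p}{q},\frac{2\pi r}{s})\cup(\frac{2\pi(s-r)}{s},\frac{2\pi(q-p)}{q})$ and $\hat{\mathcal K}_n(q,s)=\{z\in\partial\Theta_n:\arg(z)\in\arg(q,s)\}$, with arguments taken in $[0,2\pi)$. *)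

(* Defs.v *)
From HB Require Import structures.
From mathcomp Require Import all_boot all_order all_algebra.
From mathcomp Require Import complex.
From mathcomp Require Import reals trigo.
Set Implicit Arguments. Unset Strict Implicit. Unset Printing Implicit Defensive.
Import Order.TTheory GRing.Theory Num.Theory.
Local Open Scope ring_scope.

Definition stochastic (R : numDomainType) (n : nat) (A : 'M[R]_n) : Prop :=
  (forall i j, 0 <= A i j) /\ (forall i, \sum_(j < n) A i j = 1).

Definition Theta (R : realType) (n : nat) (z : R[i]) : Prop :=
  exists A : 'M[R]_n, stochastic A /\ eigenvalue (map_mx (real_complex R) A) z.

Definition cboundary (R : realType) (S : R[i] -> Prop) (z : R[i]) : Prop :=
  forall e : R, 0 < e ->
    (exists w, S w /\ `|w - z| < real_complex R e) /\ (exists w, ~ S w /\ `|w - z| < real_complex R e).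

Definition is_arg (R : realType) (z : R[i]) (theta : R) : Prop :=
  z != 0 /\ 0 <= theta < 2 * pi /\
  z = `|z| * Complex (cos theta) (sin theta).

Definition in_Farey (n p q : nat) : bool := [&& (p < q)%N, (q <= n)%N & coprime p q].

Definition Farey_pair (n p q r s : nat) : Prop :=
  in_Farey n p q /\ in_Farey n r s /\ (p * s < r * q)%N /\
  (forall a b, in_Farey n a b -> ~ ((p * b < a * q)%N /\ (a * s < r * b)%N)).

Definition in_arg_qs (R : realType) (p q r s : nat) (theta : R) : Prop :=
  (2 * pi * p%:R / q%:R < theta < 2 * pi * r%:R / s%:R) \/
  (2 * pi * (s - r)%:R / s%:R < theta < 2 * pi * (q - p)%:R / q%:R).

Definition Khat (R : realType) (n p q r s : nat) (z : R[i]) : Prop :=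
  cboundary (@Theta R n) z /\ exists theta, is_arg z theta /\ in_arg_qs p q r s theta.

(* Since qd - s may be negative, phi_alpha is in general a Laurent polynomial;
   we represent it by  phi_alpha(t) = phi_num(t) / t^s  with the genuine polynomial
   phi_num(t) = t^s (t^q - beta)^d - alpha^d t^(qd). *)
Definition phi_num (R : realType) (alpha : R) (q s d : nat) : {poly R[i]} :=
  'X^s * ('X^q - (real_complex R (1 - alpha))%:P) ^+ d - real_complex R (alpha ^+ d) *: 'X^(q * d).

(* z <> 0 is a multiple root of phi = P / t^s  iff  (t - z)^2 divides P. *)
Definition multiple_root_at (R : realType) (P : {poly R[i]}) (z : R[i]) : Prop :=
  z != 0 /\ ('X - z%:P) ^+ 2 %| P.

(* Main.v *)
Require Import Defs.
From HB Require Import structures.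
From mathcomp Require Import all_boot all_order all_algebra.
From mathcomp Require Import complex.
From mathcomp Require Import reals trigo.
From mathcomp Require Import zify ring lra.
Import Order.TTheory GRing.Theory Num.Theory.
Local Open Scope ring_scope.

Lemma farey_nohalf n p q r s j : Farey_pair n p q r s -> (q < s)%N ->
  (2 * p < j)%N -> (j * s < 2 * r * q)%N -> False.
Proof.
move=> [/and3P[pq qn cpq] [/and3P[rs sn crs] [psrq Hno]]] qs pj js.
have q0 : (0 < q)%N by lia.
have [u uq Hu] := Bezoutl p q0.
rewrite gcdnC (eqP cpq) in Hu.
set e := ((n - u) %/ q)%N.
set m := ((n - u) %% q)%N.
have Hnu : (n - u = e * q + m)%N by rewrite /e /m -divn_eq.
have mq : (m < q)%N by rewrite /m ltn_mod.
set b := (u + q * e)%N.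
have Hb : (q %| 1 + b * p)%N.
  by rewrite /b mulnDl addnA dvdn_addl // -mulnA dvdn_mulr.
set a := ((1 + b * p) %/ q)%N.
have Ha : (a * q = 1 + b * p)%N by rewrite /a divnK.
have bn : (b <= n)%N by rewrite /b; lia.
have nb : (n < q + b)%N by rewrite /b; lia.
have cab : coprime a b.
  rewrite /coprime; apply/eqP/eqP; rewrite -dvdn1.
  have h1 : (gcdn a b %| a * q)%N by rewrite dvdn_mulr // dvdn_gcdl.
  have h2 : (gcdn a b %| b * p)%N by rewrite dvdn_mulr // dvdn_gcdr.
  by rewrite Ha dvdn_addl in h1.
case: (ltnP (a * s) (r * b)) => H.
  apply: (Hno a b); last by split; lia.
  apply/and3P; split => //.
  rewrite ltnNge; apply/negP => ba.
  have : (b * s <= a * s)%N by rewrite leq_mul2r ba orbT.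
  have : (r * b < s * b)%N.
    rewrite ltn_mul2r rs andbT lt0n; apply/negP => /eqP b0.
    by move: H; rewrite b0 muln0.
  lia.
have s0 : (0 < s)%N by lia.
have h3 : (j * s * b < 2 * s * (1 + b * p))%N.
  have : (j * s * b < 2 * r * q * b)%N.
    rewrite ltn_mul2r js andbT lt0n; apply/negP => /eqP b0.
    move: Ha; rewrite b0 mul0n addn0 => aq. lia.
  have : (2 * r * q * b <= 2 * s * (1 + b * p))%N.
    rewrite -Ha.
    have : (r * b * q <= a * s * q)%N by rewrite leq_mul2r H orbT.
    lia.
  lia.
have h4 : (j * b < 2 * (1 + b * p))%N.
  have : (j * b * s < 2 * (1 + b * p) * s)%N by lia.
  by rewrite ltn_mul2r => /andP[].
have h5 : ((2 * p + 1) * b <= j * b)%N by rewrite leq_mul2r; apply/orP; right; lia.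
have : (b < 2)%N by lia.
lia.
Qed.


Lemma mult_root_deriv (F : fieldType) (P : {poly F}) (z : F) :
  ('X - z%:P) ^+ 2 %| P -> P.[z] = 0 /\ (P^`()).[z] = 0.
Proof.
case/dvdpP => Q ->; split.
  by rewrite hornerM horner_exp hornerXsubC subrr expr0n mulr0.
rewrite derivM deriv_exp hornerD !hornerM hornerMn hornerM horner_exp /= hornerXsubC subrr.
by rewrite !expr0n /= !(mulr0, mul0r, mul0rn, addr0).
Qed.


Lemma key_alg (R : realType) (alpha : R) (q s d : nat) (z : R[i]) :
  (0 < q)%N -> (0 < s)%N -> (0 < d)%N -> 0 < alpha -> z != 0 ->
  (phi_num alpha q s d).[z] = 0 -> ((phi_num alpha q s d)^`()).[z] = 0 ->
  z ^+ q * s%:R = real_complex R ((s%:R - (q * d)%:R) * (1 - alpha)).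
Proof.
move=> q0 s0 d0 a0 z0.
rewrite /phi_num.
set c := real_complex R (1 - alpha).
set k := real_complex R (alpha ^+ d).
rewrite !(derivD, derivN, derivM, derivC, derivZ, derivXn, derivX, deriv_exp).
rewrite !hornerE /=.
set W := z ^+ q - c.
move=> E1; rewrite ?(hornerMn, hornerM, hornerD, hornerN, hornerXn, horner_exp, hornerC, hornerX, hornerZ) -/W => E2.
have ex : forall m, (0 < m)%N -> z * z ^+ m.-1 = z ^+ m.
  by move=> m m0; rewrite -exprS prednK.
have qd0 : (0 < q * d)%N by rewrite muln_gt0 q0.
have Wd : W ^+ d = W * W ^+ d.-1 by rewrite -exprS prednK.
have key : z ^+ s * W ^+ d.-1 * (s%:R * W + (q * d)%:R * c) = 0.
  have -> : z ^+ s * W ^+ d.-1 * (s%:R * W + (q * d)%:R * c) =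
     z * (z ^+ s.-1 *+ s * W ^+ d + z ^+ s * ((z ^+ q.-1 *+ q - 0) * W ^+ d.-1 *+ d) -
     k * (z ^+ (q * d).-1 *+ (q * d))) - (q * d)%:R * (z ^+ s * W ^+ d - k * z ^+ (q * d)).
    rewrite Wd /W natrM -(ex _ qd0) -(ex _ s0) -(ex _ q0).
    ring.
  by rewrite E1 E2 !mulr0 subr0.

have k0 : k != 0.
  by rewrite /k fmorph_eq0 expf_eq0 (gt_eqF a0) andbF.
have W0 : W != 0.
  apply/negP => /eqP W0; move: E1; rewrite W0 expr0n (gtn_eqF d0) mulr0 sub0r.
  move/eqP; rewrite oppr_eq0 mulf_eq0 (negbTE k0) /= expf_eq0 (negbTE z0) andbF //.
move/eqP: key; rewrite !mulf_eq0 !expf_eq0 (negbTE z0) (negbTE W0) !andbF /= => /eqP key.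
have -> : ((s%:R - (q * d)%:R) * (1 - alpha))%:C%C = (s%:R - (q * d)%:R) * c :> R[i].
  by rewrite rmorphM rmorphB /= !rmorph_nat.
have : z ^+ q = W + c by rewrite /W subrK.
move=> ->.
have : s%:R * W = - ((q * d)%:R * c) by rewrite -(subr0 (s%:R * W)) -key; ring.
move=> H; rewrite mulrDl mulrC H; ring.
Qed.


Lemma mulC_cs (R : realType) (a b c d : R) :
  (Complex a b) * (Complex c d) = Complex (a * c - b * d) (a * d + b * c) :> R[i].
Proof. by []. Qed.

Lemma cis_exp (R : realType) (a : R) n :
  (Complex (cos a) (sin a)) ^+ n = Complex (cos (n%:R * a)) (sin (n%:R * a)) :> R[i].
Proof.
elim: n => [|n IH]; first by rewrite expr0 mul0r cos0 sin0.
rewrite exprS IH mulC_cs -[n.+1]addn1 natrD mulrDl mul1r cosD sinD.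
by congr Complex; ring.
Qed.

Lemma arg_sin0 (R : realType) (z : R[i]) (th x : R) (q s : nat) :
  (0 < s)%N -> is_arg z th -> z ^+ q * s%:R = real_complex R x -> sin (q%:R * th) = 0.
Proof.
move=> s0 [z0 [_ Hz]] E.
move: Hz; rewrite normc_def => Hz.
set rho := Num.sqrt _ in Hz.
have rho0 : rho != 0.
  apply/negP => /eqP r0; move: Hz; rewrite r0 mul0r => Hz; by rewrite Hz eqxx in z0.
move: E; rewrite Hz exprMn cis_exp -rmorphXn /= => E.
have := congr1 (@complex.Im R) E; rewrite mulr_natr raddfMn /=.
rewrite mul0r addr0 => /eqP; rewrite mulrn_eq0 mulf_eq0 expf_eq0 (negbTE rho0) andbF /=.
by rewrite eqn0Ngt s0 /= => /eqP.
Qed.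


Lemma sin0_npi (R : realType) (y : R) : 0 <= y -> sin y = 0 -> exists j : nat, y = j%:R * pi.
Proof.
move=> y0 sy.
have pi0 := @pi_gt0 R.
have yp0 : 0 <= y / pi by rewrite divr_ge0 // ltW.
have /andP[h1 h2] := truncn_itv yp0.
set j := Num.truncn (y / pi) in h1 h2.
exists j.
set t := y - j%:R * pi.
have h1' : j%:R * pi <= y by rewrite -ler_pdivlMr.
have h2' : y < j%:R * pi + pi.
  by rewrite -[pi in _ + pi]mul1r -mulrDl natr1 -ltr_pdivrMr.
have t0 : 0 <= t by rewrite /t; lra.
have tpi : t < pi by rewrite /t; lra.
have st : sin t = 0.
  have := alternatingn (@sinDpi R) j t.
  rewrite /t mulr_natl subrK sy => /esym /eqP.
  by rewrite mulf_eq0 signr_eq0 /= => /eqP.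
have : t = 0.
  apply/eqP; rewrite eq_le t0 andbT leNgt; apply/negP => tp.
  by have := sin_gt0_pi (introT andP (conj tp tpi)); rewrite st ltxx.
by move=> /eqP; rewrite subr_eq0 => /eqP.
Qed.

Lemma nat_aux (p q r s j : nat) : (p < q)%N -> (r < s)%N -> (j < 2 * (q - p))%N ->
  (2 * (s - r) * q < j * s)%N -> (2 * p < 2 * q - j)%N /\ ((2 * q - j) * s < 2 * r * q)%N.
Proof.
move=> pq rs jq js; split; first lia.
have e1 : (2 * (s - r) * q = 2 * s * q - 2 * r * q)%N by rewrite mulnBr mulnBl.
have e2 : ((2 * q - j) * s = 2 * q * s - j * s)%N by rewrite mulnBl.
have e3 : (r * q <= s * q)%N by rewrite leq_mul2r ltnW ?orbT.
rewrite e2; move: js; rewrite e1 => js.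
rewrite -!mulnA (mulnC q s) in js *.
lia.
Qed.

Lemma lt_pi_nat (R : realType) (a b : nat) (A B : R) :
  A < B -> A = a%:R * pi -> B = b%:R * pi -> (a < b)%N.
Proof.
by move=> AB EA EB; move: AB; rewrite EA EB ltr_pM2r ?pi_gt0 // ltr_nat.
Qed.

Theorem theorem4p2 (R : realType) (n p q r s : nat) (alpha : R) :
  Farey_pair n p q r s -> (q < s)%N -> 0 < alpha < 1 ->
  ~ (exists z : R[i],
       Khat n p q r s z /\ multiple_root_at (phi_num alpha q s (n %/ q)) z).
Proof.
move=> HF qs /andP[a0 a1] [z [[_ [th [Harg Hin]]] [z0 Hdvd]]].
have [E1 E2] := mult_root_deriv _ _ _ Hdvd.
have HF' := HF.
move: HF' => [/and3P[pq qn _] [/and3P[rs sn _] _]].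
have q0 : (0 < q)%N by lia.
have s0 : (0 < s)%N by lia.
have d0 : (0 < n %/ q)%N by rewrite divn_gt0.
have Hk := key_alg _ _ _ _ _ _ q0 s0 d0 a0 z0 E1 E2.
have Hs := arg_sin0 _ _ _ _ _ _ s0 Harg Hk.
have th0 : 0 <= th by case: Harg => _ [/andP[]].
have [j Hj] := sin0_npi _ _ (mulr_ge0 (ler0n _ q) th0) Hs.
have pi0 := @pi_gt0 R.
have qR : (q%:R : R) != 0 by rewrite pnatr_eq0 -lt0n.
have sR : (s%:R : R) != 0 by rewrite pnatr_eq0 -lt0n.
have qR0 : (0 : R) < q%:R by rewrite ltr0n.
have sR0 : (0 : R) < s%:R by rewrite ltr0n.
case: Hin => /andP[h1 h2].
- apply: (farey_nohalf _ _ _ _ _ j HF qs).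
  + apply: (@lt_pi_nat R _ _ (2 * pi * p%:R / q%:R * q%:R) (th * q%:R)).
    * by rewrite ltr_pM2r.
    * rewrite natrM; field; done.
    * by rewrite mulrC Hj.
  + apply: (@lt_pi_nat R _ _ (th * (s%:R * q%:R)) (2 * pi * r%:R / s%:R * (s%:R * q%:R))).
    * by rewrite ltr_pM2r // mulr_gt0.
    * by rewrite mulrCA (mulrC th) Hj natrM; ring.
    * rewrite !natrM; field; done.
- have jq : (j < 2 * (q - p))%N.
    apply: (@lt_pi_nat R _ _ (th * q%:R) (2 * pi * (q - p)%:R / q%:R * q%:R)).
    * by rewrite ltr_pM2r.
    * by rewrite mulrC Hj.
    * rewrite natrM; field; done.
  have js : (2 * (s - r) * q < j * s)%N.
    apply: (@lt_pi_nat R _ _ (2 * pi * (s - r)%:R / s%:R * (s%:R * q%:R)) (th * (s%:R * q%:R))).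
    * by rewrite ltr_pM2r // mulr_gt0.
    * rewrite !natrM; field; done.
    * by rewrite mulrCA (mulrC th) Hj natrM; ring.
  have [g1 g2] := nat_aux _ _ _ _ _ pq rs jq js.
  exact: (farey_nohalf _ _ _ _ _ (2 * q - j)%N HF qs g1 g2).
Qed.
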